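(* Let $A$ be a real block tridiagonal matrix with square diagonal blocks $A_{11},\dots,A_{nn}$ ($n\ge2$), off-diagonal blocks $A_{i,i+1},A_{i+1,i}$ ($i=1,\dots,n-1$) and all other blocks zero. Suppose $A_{11}>0$, $A_{nn}>0$, and for every $i=1,\dots,n-1$ $$\begin{pmatrix}A_{ii}&2A_{i,i+1}\\2A_{i+1,i}&A_{i+1,i+1}\end{pmatrix}>0.$$ Then $A>0$.
   Context: For a real square (not necessarily symmetric) matrix $M$, $M>0$ means $\mathbf{y}^\top M\mathbf{y}>0$ for all nonzero real vectors $\mathbf{y}$. *)

(* Defs.v *)
From HB Require Import structures.
From mathcomp Require Import all_boot all_order all_algebra.
Set Implicit Arguments. Unset Strict Implicit. Unset Printing Implicit Defensive.
Import Order.TTheory GRing.Theory Num.Theory.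
Local Open Scope ring_scope.

Definition posmx (R : realFieldType) (m : nat) (M : 'M[R]_m) : Prop :=
  forall y : 'cV[R]_m, y != 0 -> 0 < (y^T *m M *m y) 0 0.

Definition blockmx (R : realFieldType) (n : nat) (d : 'I_n -> nat)
  (B : forall i j : 'I_n, 'M[R]_(d i, d j)) : 'M[R]_(\sum_(i < n) d i) :=
  \mxblock_(i < n, j < n) B i j.

Definition block_tridiag (R : realFieldType) (n : nat) (d : 'I_n -> nat)
  (B : forall i j : 'I_n, 'M[R]_(d i, d j)) : Prop :=
  forall i j : 'I_n, ((i.+1 < j)%N || (j.+1 < i)%N) -> B i j = 0.

(* Main.v *)
Set Warnings "-all".
Require Import Defs.
From HB Require Import structures.
From mathcomp Require Import all_boot all_order all_algebra.
Import Order.TTheory GRing.Theory Num.Theory.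
Local Open Scope ring_scope.

Lemma lt2 i k : (i < k)%N -> (i < k.+2)%N.
Proof. by move=> h; apply: (leq_trans h); rewrite leqW // leqW. Qed.

Lemma tri_sum (R : realFieldType) (N : nat) (F : nat -> nat -> R) :
 (forall a b, (a < N)%N -> (b < N)%N -> (a.+1 < b)%N || (b.+1 < a)%N -> F a b = 0) ->
 \sum_(a < N) \sum_(b < N) F a b =
   \sum_(a < N) F a a + \sum_(a < N.-1) (F a a.+1 + F a.+1 a).
Proof.
elim: N => [|N IH] H; first by rewrite !big_ord0 addr0.
rewrite big_ord_recr /=.
under eq_bigr do rewrite big_ord_recr /=.
rewrite big_split /= IH; last first.
  by move=> a b Ha Hb; apply: H; apply: ltnW.
case: N IH H => [|k] IH H.
  by rewrite !big_ord_recr !big_ord0 /= !add0r addr0.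
have -> : \sum_(i < k.+1) F i k.+1 = F k k.+1.
  rewrite big_ord_recr /= big1 ?add0r // => i _.
  by apply: H; [exact: lt2 | by [] | by rewrite ltnS ltn_ord].
rewrite [\sum_(b < k.+2) F k.+1 b]big_ord_recr /=.
have -> : \sum_(i < k.+1) F k.+1 i = F k.+1 k.
  rewrite big_ord_recr /= big1 ?add0r // => i _.
  by apply: H; [by [] | exact: lt2 | by rewrite ltnS ltn_ord orbT].
rewrite [in RHS]big_ord_recr /= [X in _ = _ + X]big_ord_recr /=.
set D := \sum_(i < k.+1) F i i.
set O := \sum_(i < k) _.
rewrite -!addrA; congr (D + _).
rewrite [RHS]addrCA; congr (O + _).
by rewrite addrA [RHS]addrC.
Qed.

Lemma posmx_ge0 (R : realFieldType) m (M : 'M[R]_m) :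
  posmx M -> forall y : 'cV_m, 0 <= (y^T *m M *m y) 0 0.
Proof.
move=> H y; have [->|nz] := eqVneq y 0; first by rewrite mulmx0 mxE.
exact/ltW/H.
Qed.

Lemma pair_val (R : realFieldType) p q (u : 'cV[R]_p) (v : 'cV[R]_q) A X Y C :
  ((col_mx u v)^T *m block_mx A (2%:R *: X) (2%:R *: Y) C *m col_mx u v) 0 0 =
  (u^T *m A *m u) 0 0 + (v^T *m C *m v) 0 0 +
   2%:R * ((u^T *m X *m v) 0 0 + (v^T *m Y *m u) 0 0).
Proof.
rewrite tr_col_mx mul_row_block mul_row_col !mulmxDl.
rewrite -!scalemxAr -!scalemxAl !mxE.
set a := \sum_j (u^T *m A) 0 j * u j 0.
set b := \sum_j (v^T *m C) 0 j * v j 0.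
set c := \sum_j (u^T *m X) 0 j * v j 0.
set e := \sum_j (v^T *m Y) 0 j * u j 0.
rewrite mulrDr -!addrA; congr (a + _).
by rewrite [RHS]addrC -[RHS]addrA addrCA.
Qed.

Lemma block_val (R : realFieldType) n (d : 'I_n -> nat)
  (B : forall i j : 'I_n, 'M[R]_(d i, d j)) (y : 'cV[R]_(\sum_(i < n) d i)) :
  (y^T *m blockmx B *m y) 0 0 =
  \sum_(i < n) \sum_(j < n) ((submxcol y i)^T *m B i j *m submxcol y j) 0 0.
Proof.
rewrite -[y in LHS]submxcolK tr_mxcol /blockmx mul_mxrow_mxblock mul_mxrow_mxcol summxE.
under eq_bigr do rewrite mulmx_suml summxE.
by rewrite exchange_big.
Qed.

Lemma sum_pos (R : realFieldType) N (G : nat -> R) k : (k < N)%N ->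
  (forall i, (i < N)%N -> 0 <= G i) -> 0 < G k -> 0 < \sum_(i < N) G i.
Proof.
move=> hk H Hk; rewrite (bigD1 (Ordinal hk)) //=.
apply: (lt_le_trans Hk); rewrite lerDl sumr_ge0 // => i _; exact: H.
Qed.

Theorem mainTheorem7 (R : realFieldType) (n : nat) (hn : (2 <= n)%N)
  (d : 'I_n -> nat) (B : forall i j : 'I_n, 'M[R]_(d i, d j))
  (htri : block_tridiag B)
  (h1 : forall i : 'I_n, val i = 0%N -> posmx (B i i))
  (hn' : forall i : 'I_n, val i = n.-1 -> posmx (B i i))
  (hpair : forall i j : 'I_n, val j = (val i).+1 ->
     posmx (block_mx (B i i) (2%:R *: B i j) (2%:R *: B j i) (B j j))) :
  posmx (blockmx B).
Proof.
move=> y hy.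
case: n hn d B htri h1 hn' hpair y hy => [|[|m]] // _ d B htri h1 hn' hpair y hy.
rewrite block_val.
pose ys i := submxcol y i.
pose F a b := ((ys (inord a))^T *m B (inord a) (inord b) *m ys (inord b)) 0 0.
have -> : \sum_(i < m.+2) \sum_(j < m.+2) ((submxcol y i)^T *m B i j *m submxcol y j) 0 0
   = \sum_(a < m.+2) \sum_(b < m.+2) F a b.
  by apply: eq_bigr => i _; apply: eq_bigr => j _; rewrite /F /ys !inord_val.
rewrite tri_sum; last first.
  move=> a b ha hb hab; rewrite /F htri ?mulmx0 ?mul0mx ?mxE //.
  by rewrite !inordK.
pose Q k := F k k + F k.+1 k.+1 + 2%:R * (F k k.+1 + F k.+1 k).
have key : (\sum_(a < m.+2) F a a + \sum_(a < m.+1) (F a a.+1 + F a.+1 a)) *+ 2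
   = \sum_(k < m.+1) Q k + (F 0%N 0%N + F m.+1 m.+1).
  set O := \sum_(k < m.+1) (F k k.+1 + F k.+1 k).
  rewrite /Q big_split /= -mulr_sumr -/O big_split /=.
  set S1 := \sum_(k < m.+1) F k k.
  set S2 := \sum_(k < m.+1) F k.+1 k.+1.
  have D1 : \sum_(a < m.+2) F a a = S1 + F m.+1 m.+1 by rewrite big_ord_recr.
  have D2 : \sum_(a < m.+2) F a a = F 0%N 0%N + S2.
    by rewrite big_ord_recl; under eq_bigr do rewrite lift0.
  rewrite mulr2n {1}D1 D2 mulr_natl mulr2n.
  by rewrite [LHS](AC (3*3) (1*5*(3*6)*(4*2))).
change (0 < \sum_(a < m.+2) F a a + \sum_(a < m.+1) (F a a.+1 + F a.+1 a)).
rewrite -(pmulrn_lgt0 _ (isT : (0 < 2)%N)) key.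
pose PM k := block_mx (B (inord k) (inord k)) (2%:R *: B (inord k) (inord k.+1))
   (2%:R *: B (inord k.+1) (inord k)) (B (inord k.+1) (inord k.+1)).
pose w k := col_mx (ys (inord k)) (ys (inord k.+1)).
have hQ : forall k, Q k = ((w k)^T *m PM k *m w k) 0 0.
  by move=> k; rewrite /w /PM pair_val.
have hpk : forall k, (k < m.+1)%N -> posmx (PM k).
  by move=> k hk; apply: hpair; rewrite /= !inordK //; exact: ltnW.
have [i hi] : exists i, ys i != 0.
  apply/existsP; apply: contraNT hy => /existsPn H; apply/eqP.
  rewrite -[y]submxcolK.
  apply: (etrans _ (mxcol0 _)); apply: eq_mxcol => j; exact/eqP/negbNE/H.
have g0 : 0 <= F 0%N 0%N by apply: posmx_ge0; apply: h1; rewrite /= inordK.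
have gl : 0 <= F m.+1 m.+1 by apply: posmx_ge0; apply: hn'; rewrite /= inordK.
have Qpos : 0 < \sum_(k < m.+1) Q k.
  have Qge : forall k, (k < m.+1)%N -> 0 <= Q k.
    by move=> k hk; rewrite hQ; apply: posmx_ge0; exact: hpk.
  case: (ltnP i m.+1) => hi'.
    apply: (@sum_pos _ _ _ i) => //.
    rewrite hQ; apply: hpk => //.
    by rewrite /w col_mx_eq0 negb_and inord_val hi.
  have ei : val i = m.+1.
    by apply/eqP; rewrite eqn_leq hi' -ltnS ltn_ord.
  apply: (@sum_pos _ _ _ m) => //.
  rewrite hQ; apply: hpk => //.
  rewrite /w col_mx_eq0 negb_and.
  have -> : inord m.+1 = i by apply: val_inj; rewrite /= inordK ?ei.
  by rewrite hi orbT.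
apply: (lt_le_trans Qpos); rewrite lerDl addr_ge0 //.
Qed.
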